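(* There exists $n_0$ such that the following holds for all $n>n_0$. Let $r\ge25$ and let $A\subseteq S_n$ be a conjugacy class with $\mu(A)\ge e^{-n}$ such that every permutation in $A$ has at most $(r/2)^{\ell}$ cycles of length $\ell$, for every $\ell\ge1$. Then $A$ is $r$-global, i.e. for every $d\ge1$ and every $d$-umvirate $U_{I\to J}$ we have $\mu_{U_{I\to J}}(A)\le r^{d}\mu(A)$.
   Context: $\mu(A)=|A|/n!$. For distinct $i_1,\dots,i_d$ and distinct $j_1,\dots,j_d$ in $[n]$, with $I=(i_1,\dots,i_d)$, $J=(j_1,\dots,j_d)$, the $d$-umvirate $U_{I\to J}$ is the set of $\pi\in S_n$ with $\pi(i_k)=j_k$ for all $k$, and $\mu_{U}(A)=|A\cap U|/|U|$. *)

(* Defs.v *)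
From HB Require Import structures.
From mathcomp Require Import all_boot all_order all_algebra all_fingroup.
From mathcomp Require Import reals sequences exp.
Set Implicit Arguments. Unset Strict Implicit. Unset Printing Implicit Defensive.
Import Order.TTheory GRing.Theory Num.Theory.
Local Open Scope ring_scope.

Definition mu (R : realType) (n : nat) (A : {set 'S_n}) : R :=
  #|A|%:R / (n`!)%:R.

Definition umvirate (n d : nat) (I J : 'I_d -> 'I_n) : {set 'S_n} :=
  [set s : 'S_n | [forall k : 'I_d, s (I k) == J k]].

Definition mu_cond (R : realType) (n : nat) (U A : {set 'S_n}) : R :=
  #|A :&: U|%:R / #|U|%:R.

(* number of cycles of length l of s (fixed points are cycles of length 1) *)
Definition ncycles (n : nat) (s : 'S_n) (l : nat) : nat :=
  #|[set X in porbits s | #|X| == l]|.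

Definition r_global (R : realType) (n : nat) (r : R) (A : {set 'S_n}) : Prop :=
  forall (d : nat) (I J : 'I_d -> 'I_n), (1 <= d)%N ->
    injective I -> injective J ->
    mu_cond R (umvirate I J) A <= r ^+ d * mu R A.

(* Main.v *)
Require Import Defs.
From HB Require Import structures.
From mathcomp Require Import all_boot all_order all_algebra all_fingroup.
From mathcomp Require Import reals sequences exp.
From mathcomp Require Import ring lra zify.
Import Order.TTheory GRing.Theory Num.Theory.
Set Implicit Arguments. Unset Strict Implicit. Unset Printing Implicit Defensive.


Section Core.
Variable (n : nat) (pi : 'S_n).

Local Notation fT := {ffun 'I_n -> 'I_n}.
Definition edg := 'I_n -> option ('I_n * nat).
Definition wt (o : option ('I_n * nat)) : nat := if o is Some (_, w) then w else 0.
Definition Wt (out : edg) : nat := \sum_a wt (out a).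
Definition tails (out : edg) := [set a | out a != None].
Definition hd (out : edg) a := if out a is Some (b, _) then b else a.
Definition heads (out : edg) := [set hd out a | a in tails out].
Definition wf (D : {set 'I_n}) (out : edg) :=
  (forall a b w, out a = Some (b, w) -> [/\ a \in D, b \in D & (0 < w)%N]) /\
  (forall a a' b w w', out a = Some (b, w) -> out a' = Some (b, w') -> a = a').
Definition Sol (D : {set 'I_n}) (out : edg) : {set fT} :=
  [set g : fT | [forall x, (x \notin D) ==> (g x == x)] &&
    [forall x, forall y, (x \in D) ==> (y \in D) ==> (g x == g y) ==> (x == y)] &&
    [forall a, if out a is Some (b, w) then g b == (pi ^+ w)%g (g a) else true]].

Lemma SolP (D : {set 'I_n}) (out : edg) (g : fT) : reflect
  [/\ (forall x, x \notin D -> g x = x), {in D &, injective g} &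
      (forall a b w, out a = Some (b, w) -> g b = (pi ^+ w)%g (g a))]
  (g \in Sol D out).
Proof.
rewrite inE; apply: (iffP idP).
  case/andP => [/andP [/forallP h1 /forallP h2] /forallP h3]; split.
  - by move=> x xD; apply/eqP; move: (h1 x); rewrite xD.
  - move=> x y xD yD gxy; move: (h2 x) => /forallP /(_ y).
    by rewrite xD yD gxy eqxx /= => /eqP.
  - by move=> a b w e; move: (h3 a); rewrite e => /eqP.
case=> h1 h2 h3; apply/andP; split; first (apply/andP; split).
- by apply/forallP => x; apply/implyP => xD; rewrite h1.
- apply/forallP => x; apply/forallP => y; apply/implyP => xD; apply/implyP => yD.
  by apply/implyP => /eqP e; rewrite (h2 x y xD yD e).
- apply/forallP => a; case e: (out a) => [[b w]|] //.
  by rewrite (h3 a b w e).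
Qed.

Definition res (x : 'I_n) (g : fT) : fT := [ffun y => if y == x then x else g y].

Lemma fiber_bound (S S' : {set fT}) (x : 'I_n) (K : nat) :
  (forall g : fT, g \in S -> res x g \in S') ->
  (forall g' : fT, g' \in S' -> #|[set (g : fT) x | g in [set g in S | res x g == g']]| <= K) ->
  (#|S| <= K * #|S'|)%N.
Proof.
move=> hS hK.
rewrite -sum1_card (partition_big (res x) (mem S')) //=.
apply: (@leq_trans (\sum_(j in S') K)); last by rewrite sum_nat_const mulnC.
apply: leq_sum => g' g'S.
rewrite sum1dep_card.
rewrite -[X in (X <= _)%N](card_in_imset (f := fun g : fT => g x)
        (D := [set g in S | res x g == g'])).
  by apply: hK.
move=> g1 g2; rewrite !inE => /andP [_ /eqP e1] /andP [_ /eqP e2] e.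
apply/ffunP => y; case: (eqVneq y x) => [-> //|nyx].
have := congr1 (fun h : fT => h y) (etrans e1 (esym e2)).
by rewrite !ffunE (negbTE nyx).
Qed.


Lemma res_sol (D : {set 'I_n}) (out out' : edg) x (g : fT) : g \in Sol D out ->
  (forall a b w, out' a = Some (b, w) -> [/\ a != x, b != x & g b = (pi ^+ w)%g (g a)]) ->
  res x g \in Sol (D :\ x) out'.
Proof.
case/SolP => h1 h2 h3 h4; apply/SolP; split.
- move=> y; rewrite !inE negb_and negbK ffunE.
  by case: (eqVneq y x) => [->//|_] /= /h1.
- move=> y1 y2; rewrite !inE !ffunE => /andP [/negbTE -> y1D] /andP [/negbTE -> y2D].
  exact: h2.
- move=> a b w /h4 [ax bx e]; by rewrite !ffunE (negbTE ax) (negbTE bx).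
Qed.

Lemma step (D : {set 'I_n}) (out out' : edg) x (Y : fT -> {set 'I_n}) K :
  (forall g, g \in Sol D out -> res x g \in Sol (D :\ x) out') ->
  (forall g, g \in Sol D out -> g x \in Y (res x g)) ->
  (forall g', g' \in Sol (D :\ x) out' -> (#|Y g'| <= K)%N) ->
  (#|Sol D out| <= K * #|Sol (D :\ x) out'|)%N.
Proof.
move=> hr hY hK; apply: (fiber_bound (x := x)) => // g' g'S.
apply: leq_trans (hK g' g'S); apply: subset_leq_card.
apply/subsetP => z /imsetP [g]; rewrite inE => /andP [gS /eqP <-] ->.
exact: hY.
Qed.


Definition kill (out : edg) x : edg := fun y => if y == x then None else out y.

Lemma Wt_kill out x : Wt out = (wt (out x) + Wt (kill out x))%N.
Proof.
rewrite /Wt (bigD1 x) //= [X in _ = (_ + X)%N](bigD1 x) //= /kill eqxx add0n.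
by congr (_ + _)%N; apply: eq_bigr => y /negbTE ->.
Qed.

Lemma tails_kill out x : tails (kill out x) = tails out :\ x.
Proof. by apply/setP => y; rewrite !inE /kill; case: (y == x). Qed.

Lemma tails_sub D out : wf D out -> tails out \subset D.
Proof.
case=> h _; apply/subsetP => a; rewrite inE; case e: (out a) => [[b w]|] // _.
by case: (h _ _ _ e).
Qed.

Lemma heads_sub D out : wf D out -> heads out \subset D.
Proof.
case=> h _; apply/subsetP => c /imsetP [a]; rewrite inE /hd.
case e: (out a) => [[b w]|] // _ ->; by case: (h _ _ _ e).
Qed.

Lemma tails_Wt D out : wf D out -> (#|tails out| <= Wt out)%N.
Proof.
case=> h _; rewrite -sum1_card /Wt [X in (_ <= X)%N](bigID (mem (tails out))) /=.
apply: leq_trans (leq_addr _ _); apply: leq_sum => a; rewrite inE.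
case e: (out a) => [[b w]|] // _ /=; by case: (h _ _ _ e).
Qed.


Lemma in_heads out a b w : out a = Some (b, w) -> b \in heads out.
Proof. by move=> e; apply/imsetP; exists a; rewrite /hd ?inE e. Qed.

Section Main.
Local Open Scope ring_scope.
Variables (R : realFieldType) (r : R).
Hypothesis hr5 : 5 <= r.
Hypothesis hF : forall w, (0 < w)%N -> (#|[set y | (pi ^+ w)%g y == y]|)%:R <= r ^+ w.

Lemma aux (P Q G a b : R) : 0 <= P -> 0 <= G -> 5 <= Q -> 0 <= b -> a <= 5 * b -> P * (a * G) <= P * Q * G * b.
Proof.
move=> P0 G0 Q5 b0 ab.
have h1 : a * G <= Q * b * G by apply: ler_wpM2r => //; apply: le_trans ab _; apply: ler_wpM2r.
have -> : P * Q * G * b = P * (Q * b * G) by ring.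
by apply: ler_wpM2l.
Qed.

Lemma main_count m : forall (D : {set 'I_n}) (out : edg), #|D| = m -> wf D out ->
  (5 * Wt out < 2 * n)%N ->
  ((#|Sol D out| * (n - m)`!)%:R : R) <= r ^+ Wt out * ((n - #|tails out|)`!)%:R.
Proof.
have r1 : 1 <= r by apply: le_trans hr5; rewrite ler1n.
have r0 : 0 <= r by apply: le_trans r1.
elim: m => [|m ih] D out cD wfo hW.
  move/eqP: cD; rewrite cards_eq0 => /eqP DE.
  have -> : tails out = set0.
    by apply/eqP; rewrite -subset0 -DE; apply: tails_sub wfo.
  rewrite cards0 subn0 natrM; apply: ler_pM => //; rewrite ?ler0n //.
  apply: le_trans (exprn_ege1 _ r1); rewrite -[1]/(1%:R) ler_nat.
  apply: (@leq_trans #|[set [ffun y : 'I_n => y]]|); last by rewrite cards1.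
  apply: subset_leq_card; apply/subsetP => g /SolP [h1 _ _].
  rewrite inE; apply/eqP/ffunP => y; by rewrite ffunE h1 // DE inE.
have mn : (m < n)%N by rewrite -cD -[X in (_ <= X)%N]card_ord max_card.
have [Tsub Hsub] := (tails_sub wfo, heads_sub wfo).
case: wfo => [wf1 wf2].
case: (boolP [exists x in D, (out x == None) && (x \notin heads out)]).
  case/exists_inP => x xD /andP [/eqP ox xh].
  have cD' : #|D :\ x| = m by move: cD; rewrite (cardsD1 x) xD add1n => [[]].
  have wf' : wf (D :\ x) out.
    split=> // a b w e; have [aD bD w0] := wf1 _ _ _ e; split=> //; rewrite !inE ?aD ?bD andbT.
    - by apply/eqP => ax; rewrite ax ox in e.
    - by apply/eqP => bx; move: xh; rewrite -bx (in_heads e).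
  have key : (#|Sol D out| <= (n - m) * #|Sol (D :\ x) out|)%N.
    apply: (step (x := x) (Y := fun g' => ~: [set g' y | y in D :\ x])).
    - move=> g gS; apply: (res_sol (out := out)) => [//|a b w e].
      case: wf' => h _; have [] := h _ _ _ e; rewrite !inE => /andP [ax _] /andP [bx _] _.
      by split=> //; case/SolP: gS => _ _ h3; apply: h3.
    - move=> g gS; rewrite inE; apply/imsetP => [[y yDx]]; rewrite ffunE.
      move/setD1P: (yDx) => [yx yD]; rewrite (negbTE yx) => e.
      case/SolP: gS => _ h2 _; have xy := h2 _ _ xD yD e.
      by move: yx; rewrite xy eqxx.
    - move=> g' /SolP [_ h2 _]; have := cardsC [set g' y | y in D :\ x].
      rewrite card_in_imset; last exact: h2.
      by rewrite cD' card_ord => e; rewrite -[X in (_ <= X - _)%N]e addKn.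
  apply: le_trans (ih _ _ cD' wf' hW); rewrite ler_nat.
  rewrite -(subnSK mn) factS mulnCA mulnA.
  by apply: leq_mul => //; rewrite (subnSK mn).
rewrite negb_exists_in => /forall_inP hA.
case: (boolP [exists x in D, (out x != None) && (x \notin heads out)]).
  case/exists_inP => x xD /andP [ox xh].
  case ex: (out x) ox => [[b w]|] // _.
  have bx : b != x by apply/eqP => bx; move: xh; rewrite -bx (in_heads ex).
  have [_ _ w0] := wf1 _ _ _ ex.
  have cD' : #|D :\ x| = m by move: cD; rewrite (cardsD1 x) xD add1n => [[]].
  pose out' := kill out x.
  have wf' : wf (D :\ x) out'.
    split.
    - move=> a c w'; rewrite /out' /kill; case: eqP => // /eqP ax e.
      have [aD cD0 w'0] := wf1 _ _ _ e; split=> //; rewrite !inE ?aD ?cD0 ?ax andbT //.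
      by apply/eqP => cx; move: xh; rewrite -cx (in_heads e).
    - move=> a a' c w1 w1'; rewrite /out' /kill; case: eqP => // _ e1; case: eqP => // _ e2.
      exact: wf2 e1 e2.
  have key : (#|Sol D out| <= 1 * #|Sol (D :\ x) out'|)%N.
    apply: (step (x := x) (Y := fun g' => [set ((pi ^+ w)^-1)%g (g' b)])).
    - move=> g gS; apply: (res_sol (out := out)) => [//|a c w' e].
      move: e; rewrite /out' /kill; case: eqP => // /eqP ax e.
      split=> //; first by apply/eqP => cx; move: xh; rewrite -cx (in_heads e).
      by case/SolP: gS => _ _ h3; apply: h3.
    - move=> g gS; rewrite inE ffunE (negbTE bx); case/SolP: gS => _ _ h3.
      by rewrite (h3 _ _ _ ex) permK.
    - by move=> g' _; rewrite cards1.
  rewrite mul1n in key.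
  have xT : x \in tails out by rewrite inE ex.
  have eT : #|tails out| = #|tails out'|.+1.
    by rewrite /out' tails_kill (cardsD1 x (tails out)) xT.
  have eW : Wt out = (w + Wt out')%N by rewrite (Wt_kill out x) ex.
  have hW' : (5 * Wt out' < 2 * n)%N by move: hW; rewrite eW; lia.
  have ih' := ih _ _ cD' wf' hW'.
  have m2 : (m.+1 <= 2 * #|tails out|)%N.
    rewrite -cD; apply: (@leq_trans #|tails out :|: heads out|).
      apply: subset_leq_card; apply/subsetP => y yD; rewrite inE.
      move: (hA y yD); rewrite negb_and negbK inE.
      by case: (out y) => [[? ?]|] //= ->; rewrite orbT.
    rewrite cardsU; apply: (leq_trans (leq_subr _ _)).
    by rewrite mul2n -addnn leq_add2l leq_imset_card.
  have eW2 : (#|tails out| <= Wt out)%N := tails_Wt (conj wf1 wf2).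
  have eTD : (#|tails out| <= m.+1)%N by rewrite -cD subset_leq_card.
  move: ih' m2 eW2 eTD; rewrite eT eW.
  set e := #|tails out'|; set W' := Wt out' => ih' m2 eW2 eTD.
  have en : (e < n)%N by lia.
  have key2 : (n - e <= 5 * (n - m))%N by move: hW; rewrite eW -/W'; lia.
  rewrite -(@ler_pM2r _ (n - m)%:R); last by rewrite ltr0n subn_gt0.
  apply: (@le_trans _ _ ((#|Sol (D :\ x) out'| * (n - m)`!)%:R)).
    rewrite -natrM ler_nat -(subnSK mn) factS (subnSK mn) -mulnA (mulnC (n - m.+1)`!).
    by rewrite leq_mul.
  apply: (le_trans ih').
  rewrite -(subnSK en) factS (subnSK en) natrM exprD [r ^+ w * _]mulrC.
  apply: aux; rewrite ?exprn_ge0 ?ler0n //.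
    rewrite -(prednK w0) exprS; apply: le_trans hr5 _; rewrite -[X in X <= _]mulr1.
    by apply: ler_wpM2l => //; exact: exprn_ege1.
  by rewrite -natrM ler_nat.
rewrite negb_exists_in => /forall_inP hB.
have hh : forall x, x \in D -> x \in heads out.
  move=> x xD; move: (hA x xD) (hB x xD); rewrite !negb_and !negbK.
  by case: (out x == None).
have tD : tails out = D.
  apply/eqP; rewrite eqEcard Tsub /=.
  apply: (leq_trans _ (leq_imset_card (hd out) (mem (tails out)))); apply: subset_leq_card.
  by apply/subsetP.
case: (boolP [exists x in D, hd out x != x]).
  case/exists_inP => x xD hx.
  have xT : x \in tails out by rewrite tD.
  move: (xT); rewrite inE; case ex: (out x) => [[b w2]|] // _.
  have bx : b != x by move: hx; rewrite /hd ex.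
  have [_ bD w20] := wf1 _ _ _ ex.
  case/imsetP: (hh x xD) => a aT xa.
  move: (aT); rewrite inE; case ea: (out a) => [[c w1]|] // _.
  have cx : c = x by move: xa; rewrite /hd ea.
  rewrite {c xa}cx in ea.
  have ax : a != x.
    by apply/eqP => ax; move: ea; rewrite ax ex => [[bx']]; rewrite bx' eqxx in bx.
  have [aD _ w10] := wf1 _ _ _ ea.
  pose out' : edg := fun y => if y == x then None
                   else if y == a then Some (b, (w1 + w2)%N) else out y.
  have cD' : #|D :\ x| = m by move: cD; rewrite (cardsD1 x) xD add1n => [[]].
  have E : forall y c w, out' y = Some (c, w) ->
      (y = a /\ c = b) \/ [/\ y != a, y != x, c != x & out y = Some (c, w)].
    move=> y c w; rewrite /out'; case: eqP => // /eqP yx; case: eqP => [-> [<- _]|/eqP ya e].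
      by left.
    right; split=> //; apply/eqP => cx; rewrite cx in e.
    by move: ya; rewrite (wf2 _ _ _ _ _ e ea) eqxx.
  have wf' : wf (D :\ x) out'.
    split.
    - move=> y c w; rewrite /out'; case: eqP => // /eqP yx.
      case: eqP => [-> [<- <-]|/eqP ya e].
        by split; rewrite ?inE ?ax ?aD ?bx ?bD // addn_gt0 w10.
      have [yD cD0 w0] := wf1 _ _ _ e.
      have E' : out' y = Some (c, w) by rewrite /out' (negbTE yx) (negbTE ya).
      have [[ya' _]|[_ _ cx e']] := E y c w E'; first by rewrite ya' eqxx in ya.
      by split=> //; rewrite !inE ?yx ?yD ?cD0 ?cx.
    - move=> y y' c w w' e1 e2.
      case: (E _ _ _ e1) (E _ _ _ e2) => [[ya cb]|[ya yx _ o1]] [[ya' cb']|[ya' yx' _ o2]].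
      + by rewrite ya ya'.
      + by rewrite cb in o2; move: yx'; rewrite (wf2 _ _ _ _ _ o2 ex) eqxx.
      + by rewrite cb' in o1; move: yx; rewrite (wf2 _ _ _ _ _ o1 ex) eqxx.
      + exact: wf2 o1 o2.
  have key : (#|Sol D out| <= 1 * #|Sol (D :\ x) out'|)%N.
    apply: (step (x := x) (Y := fun g' => [set (pi ^+ w1)%g (g' a)])).
    - move=> g gS; apply: (res_sol (out := out)) => [//|y c w e].
      case/SolP: gS => _ _ h3.
      case: (E _ _ _ e) => [[ya cb]|[_ yx cx o]]; last by split=> //; apply: h3.
      move: e; rewrite ya cb /out' (negbTE ax) eqxx => [[<-]].
      split=> //; rewrite (h3 _ _ _ ex) (h3 _ _ _ ea).
      by rewrite expgD permM.
    - move=> g gS; rewrite inE ffunE (negbTE ax); case/SolP: gS => _ _ h3.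
      by rewrite (h3 _ _ _ ea).
    - by move=> g' _; rewrite cards1.
  rewrite mul1n in key.
  have eW : Wt out' = Wt out.
    rewrite /Wt (bigD1 x) // [X in _ = X](bigD1 x) //= /out' eqxx add0n ex /=.
    rewrite (bigD1 a) ?ax //= [X in _ = (_ + X)%N](bigD1 a) ?ax //= (negbTE ax) eqxx ea /=.
    rewrite addnCA addnA; congr (_ + _)%N; apply: eq_bigr => y /andP [/negbTE -> /negbTE ->].
    done.
  have eT : tails out' = tails out :\ x.
    apply/setP => y; rewrite !inE /out'; case: (y == x) => //=.
    by case: (eqVneq y a) => [->|_]; rewrite ?ea.
  have hW' : (5 * Wt out' < 2 * n)%N by rewrite eW.
  have ih' := ih _ _ cD' wf' hW'.
  move: ih'; rewrite eT tD cD' eW natrM => ih'.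
  have S' : (#|Sol (D :\ x) out'|)%:R <= r ^+ Wt out.
    by rewrite -(@ler_pM2r _ (n - m)`!%:R) // ltr0n fact_gt0.
  rewrite cD natrM; apply: ler_wpM2r => //.
  by apply: le_trans S'; rewrite ler_nat.
rewrite negb_exists_in => /forall_inP hC.
have : (0 < #|D|)%N by rewrite cD.
case/card_gt0P => x xD.
have xT : x \in tails out by rewrite tD.
move: (xT); rewrite inE; case ex: (out x) => [[c w]|] // _.
have cx : c = x by move: (hC x xD); rewrite negbK /hd ex => /eqP.
rewrite {c}cx in ex.
have [_ _ w0] := wf1 _ _ _ ex.
have cD' : #|D :\ x| = m by move: cD; rewrite (cardsD1 x) xD add1n => [[]].
pose out' := kill out x.
have nx : forall y c w', out y = Some (c, w') -> y != x -> c != x.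
  move=> y c w' e yx; apply/eqP => cx; rewrite cx in e.
  by move: yx; rewrite (wf2 _ _ _ _ _ e ex) eqxx.
have wf' : wf (D :\ x) out'.
  split.
  - move=> a c w'; rewrite /out' /kill; case: eqP => // /eqP ax e.
    have [aD cD0 w'0] := wf1 _ _ _ e; split=> //; rewrite !inE ?aD ?cD0 ?ax andbT //.
    exact: nx e ax.
  - move=> a a' c w1 w1'; rewrite /out' /kill; case: eqP => // _ e1; case: eqP => // _ e2.
    exact: wf2 e1 e2.
have key : (#|Sol D out| <= #|[set y | (pi ^+ w)%g y == y]| * #|Sol (D :\ x) out'|)%N.
  apply: (step (x := x) (Y := fun g' => [set y | (pi ^+ w)%g y == y])).
  - move=> g gS; apply: (res_sol (out := out)) => [//|a c w' e].
    move: e; rewrite /out' /kill; case: eqP => // /eqP ax e.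
    split=> //; first exact: nx e ax.
    by case/SolP: gS => _ _ h3; apply: h3.
  - move=> g gS; rewrite inE; case/SolP: gS => _ _ h3.
    by rewrite -(h3 _ _ _ ex).
  - by [].
have eT : #|tails out'| = m by rewrite /out' tails_kill tD cD'.
have eW : Wt out = (w + Wt out')%N by rewrite (Wt_kill out x) ex.
have hW' : (5 * Wt out' < 2 * n)%N by move: hW; rewrite eW; lia.
have ih' := ih _ _ cD' wf' hW'.
move: ih'; rewrite eT natrM => ih'.
have S' : (#|Sol (D :\ x) out'|)%:R <= r ^+ Wt out'.
  by rewrite -(@ler_pM2r _ (n - m)`!%:R) // ltr0n fact_gt0.
rewrite tD cD natrM; apply: ler_wpM2r => //.
apply: le_trans (_ : (#|[set y | (pi ^+ w)%g y == y]| * #|Sol (D :\ x) out'|)%:R <= _).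
  by rewrite ler_nat.
rewrite natrM eW exprD; apply: ler_pM => //; rewrite ?ler0n //.
exact: hF.
Qed.

End Main.


Section Init.
Variables (d : nat) (I J : 'I_d -> 'I_n).
Hypotheses (injI : injective I) (injJ : injective J).

Definition out0 : edg := fun a => if [pick k | I k == a] is Some k then Some (J k, 1%N) else None.

Lemma out0I k : out0 (I k) = Some (J k, 1%N).
Proof.
rewrite /out0; case: pickP => [k' /eqP /injI -> //|/(_ k)]; by rewrite eqxx.
Qed.

Lemma out0P a b w : out0 a = Some (b, w) -> exists k, [/\ a = I k, b = J k & w = 1%N].
Proof.
rewrite /out0; case: pickP => // k /eqP <- [<- <-]; by exists k.
Qed.

Lemma wf0 : wf setT out0.
Proof.
split; first by move=> a b w /out0P [k [-> -> ->]]; rewrite !inE.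
move=> a a' b w w' /out0P [k [-> -> _]] /out0P [k' [-> /injJ -> _]] //.
Qed.

Lemma tails0 : tails out0 = [set I k | k in 'I_d].
Proof.
apply/setP => a; rewrite inE; apply/idP/imsetP.
  case e: (out0 a) => [[b w]|] // _; case: (out0P e) => k [-> _ _]; by exists k.
by case=> k _ ->; rewrite out0I.
Qed.

Lemma Wt0 : Wt out0 = d.
Proof.
rewrite /Wt (bigID (mem (tails out0))) /= [X in (_ + X)%N]big1; last first.
  by move=> a; rewrite inE negbK => /eqP ->.
rewrite addn0 (eq_bigr (fun _ => 1%N)); last first.
  by move=> a; rewrite inE; case e: (out0 a) => [[b w]|] // _; case: (out0P e) => k [_ _ ->].
rewrite sum1_card tails0 card_imset // card_ord //.
Qed.

Lemma TU_le : (#|[set t : 'S_n | (pi ^ t)%g \in umvirate I J]| <= #|Sol setT out0|)%N.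
Proof.
rewrite -(card_in_imset (f := fun t : 'S_n => [ffun x => (t^-1)%g x])); last first.
  move=> t1 t2 _ _ e; apply: invg_inj; apply/permP => x.
  by have := congr1 (fun h : fT => h x) e; rewrite !ffunE.
apply: subset_leq_card; apply/subsetP => g /imsetP [t]; rewrite inE /umvirate inE => /forallP h ->.
apply/SolP; split.
- by move=> x; rewrite inE.
- by move=> x y _ _; rewrite !ffunE => /perm_inj.
- move=> a b w /out0P [k [-> -> ->]]; rewrite !ffunE expg1.
  move/eqP: (h k) => <-; rewrite conjgE !permM permK.
  done.
Qed.

End Init.

End Core.


Lemma ext_perm (n d : nat) (I J : 'I_d -> 'I_n) : injective I -> injective J ->
  exists s : 'S_n, forall k, s (I k) = J k.
Proof.
move=> iI iJ.
pose RI := [set I k | k in 'I_d]; pose RJ := [set J k | k in 'I_d].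
pose cI := enum (~: RI); pose cJ := enum (~: RJ).
have sz : size cI = size cJ.
  rewrite -!cardE; apply/eqP; rewrite -(eqn_add2l #|RI|) cardsC /RI card_imset //.
  by rewrite -(card_imset _ iJ) cardsC.
pose f x := if [pick k | I k == x] is Some k then J k else nth x cJ (index x cI).
have fI : forall k, f (I k) = J k.
  move=> k; rewrite /f; case: pickP => [k' /eqP /iI -> //|/(_ k)]; by rewrite eqxx.
have fn : forall x, x \notin RI -> (index x cI < size cJ)%N /\ f x = nth x cJ (index x cI).
  move=> x xn; split; first by rewrite -sz index_mem mem_enum inE.
  rewrite /f; case: pickP => [k /eqP ekx|//].
  by move: xn; rewrite -ekx mem_imset.
have fJ : forall x, x \notin RI -> f x \notin RJ.
  move=> x /fn [lt ->]; have := mem_nth x lt; by rewrite mem_enum inE.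
have finj : injective f.
  move=> x1 x2.
  case: (boolP (x1 \in RI)) => [/imsetP [k1 _ ->]|n1];
    case: (boolP (x2 \in RI)) => [/imsetP [k2 _ ->]|n2].
  - by rewrite !fI => /iJ ->.
  - by rewrite fI => e; move: (fJ _ n2); rewrite -e mem_imset.
  - by rewrite fI => e; move: (fJ _ n1); rewrite e mem_imset.
  - have [l1 e1] := fn _ n1; have [l2 e2] := fn _ n2.
    rewrite e1 e2 (set_nth_default x1 x2 l2) => /eqP.
    rewrite nth_uniq ?enum_uniq // => /eqP ei.
    have m1 : x1 \in cI by rewrite mem_enum inE.
    have m2 : x2 \in cI by rewrite mem_enum inE.
    by rewrite -(nth_index x1 m1) ei (nth_index x1 m2).
exists (perm finj) => k; by rewrite permE fI.
Qed.

Lemma card_umv (n d : nat) (I J : 'I_d -> 'I_n) : injective I -> injective J ->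
  #|umvirate I J| = (n - d)`!.
Proof.
move=> iI iJ.
have dn : (d <= n)%N by have := max_card [set I k | k in 'I_d]; rewrite card_imset // !card_ord.
have eqU : forall J' : 'I_d -> 'I_n, injective J' -> #|umvirate I J'| = #|umvirate I J|.
  have le : forall J1 J2 : 'I_d -> 'I_n, injective J1 -> injective J2 ->
      (#|umvirate I J1| <= #|umvirate I J2|)%N.
    move=> J1 J2 i1 i2; have [rho hr] := ext_perm i1 i2.
    rewrite -(card_imset _ (mulIg rho)); apply: subset_leq_card.
    apply/subsetP => s /imsetP [t]; rewrite !inE => /forallP h ->.
    by apply/forallP => k; rewrite permM (eqP (h k)) hr.
  by move=> J' iJ'; apply/eqP; rewrite eqn_leq !le.
have := card_inj_ffuns 'I_d 'I_n; rewrite !card_ord => cF.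
have tot : (n`! = #|[set f : {ffun 'I_d -> 'I_n} | injectiveb f]| * #|umvirate I J|)%N.
  rewrite -card_Sn -[in LHS]sum1_card.
  rewrite (partition_big (fun s : 'S_n => [ffun k => s (I k)])
             (mem [set f : {ffun 'I_d -> 'I_n} | injectiveb f])) /=; last first.
    move=> s _; rewrite inE; apply/injectiveP => k1 k2; rewrite !ffunE.
    by move/perm_inj/iI.
  rewrite -sum_nat_const; apply: eq_bigr => f; rewrite inE => /injectiveP fi.
  rewrite sum1_card -(eqU _ fi); apply: eq_card => s; rewrite /umvirate [in RHS]inE.
  rewrite -[s \in _]/([ffun k => s (I k)] == f).
  apply/eqP/forallP => [<- k|h]; first by rewrite ffunE.
  by apply/ffunP => k; rewrite ffunE (eqP (h k)).
move: tot; rewrite cF -(ffact_fact dn) => /eqP; rewrite eqn_pmul2l ?ffact_gt0 //.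
by move/eqP.
Qed.


Lemma conj_count (gT : finGroupType) (pi : gT) (B : {set gT}) :
  #|[set t : gT | (pi ^ t)%g \in B]| =
  (#|(pi ^: [set: gT])%g :&: B| * #|[set c : gT | (pi ^ c)%g == pi]|)%N.
Proof.
rewrite -sum1_card (partition_big (fun t => (pi ^ t)%g) (mem ((pi ^: [set: gT])%g :&: B))) /=;
  last by move=> t; rewrite !inE memJ_class ?inE.
rewrite -sum_nat_const; apply: eq_bigr => s; rewrite inE => /andP [/imsetP [t0 _ ->] t0B].
rewrite sum1dep_card.
rewrite -[in RHS](card_imset _ (mulIg t0)); apply: eq_card => t; rewrite !inE.
apply/andP/imsetP.
  case=> _ /eqP e; exists (t * t0^-1)%g; last by rewrite mulgKV.
  by rewrite inE conjgM e conjgK.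
case=> c; rewrite inE => /eqP ec ->; by rewrite conjgM ec.
Qed.



Lemma porbit_small (n : nat) (pi : 'S_n) w y : (0 < w)%N -> (pi ^+ w)%g y = y ->
  (#|porbit pi y| <= w)%N.
Proof.
move=> w0 fy.
apply: (@leq_trans #|[set (pi ^+ (i : 'I_w))%g y | i in 'I_w]|); last first.
  by rewrite (leq_trans (leq_imset_card _ _)) // card_ord.
apply: subset_leq_card; apply/subsetP => z /porbitP [i ->].
apply/imsetP; exists (Ordinal (ltn_pmod i w0)) => //=.
have h : ((pi ^+ w) ^+ (i %/ w))%g y = y by rewrite permX iter_fix.
by rewrite {1}(divn_eq i w) expgD permM mulnC expgM h.
Qed.

Lemma fix_count (n : nat) (pi : 'S_n) w : (0 < w)%N ->
  (#|[set y | (pi ^+ w)%g y == y]| <= \sum_(l < w.+1) l * ncycles pi l)%N.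
Proof.
move=> w0.
pose P' := [set X in porbits pi | #|X| <= w].
rewrite -sum1_card (partition_big (porbit pi) (mem P')) /=; last first.
  move=> y; rewrite inE => /eqP fy; rewrite inE imset_f //=.
  exact: porbit_small.
apply: (@leq_trans (\sum_(X in P') #|X|)).
  apply: leq_sum => X XP; rewrite sum1dep_card; apply: subset_leq_card.
  by apply/subsetP => y; rewrite inE => /andP [_ /eqP <-]; apply: porbit_id.
rewrite (partition_big (fun X : {set 'I_n} => (inord #|X| : 'I_w.+1)) xpredT) //=.
apply: leq_sum => l _.
rewrite (eq_bigr (fun _ => nat_of_ord l)); last first.
  move=> X /andP [XP /eqP <-]; rewrite inordK //; move: XP; rewrite inE => /andP [_].
  by rewrite ltnS.
rewrite sum_nat_const mulnC leq_mul2l; apply/orP; right.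
apply: subset_leq_card; apply/subsetP => X; rewrite unfold_in /= !inE => /andP [/andP [XP Xw] /eqP e].
by rewrite XP -e inordK ?ltnS //=.
Qed.

Section CycR.
Local Open Scope ring_scope.

Lemma geo_bound (R : realFieldType) (r : R) : 2 <= r -> forall w : nat,
  \sum_(l < w.+1) (l%:R * (r / 2) ^+ l) <= r ^+ w.
Proof.
move=> r2; set q := r / 2.
have q0 : 0 <= q by rewrite /q divr_ge0 //; apply: le_trans r2.
have qr : q <= r - 1 by rewrite /q; lra.
have rq : r = 2 * q by rewrite /q; field.
elim=> [|w ih]; first by rewrite big_ord_recr big_ord0 /= add0r mul0r expr0.
rewrite big_ord_recr /= [r ^+ w.+1]exprS.
have hb : (w.+1)%:R <= 2 ^+ w :> R.
  by rewrite -natrX ler_nat ltn_expl.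
have h2 : (w.+1)%:R * (q * q ^+ w) <= (r - 1) * r ^+ w.
  have -> : (w.+1)%:R * (q * q ^+ w) = (q * (w.+1)%:R) * q ^+ w by ring.
  have -> : (r - 1) * r ^+ w = ((r - 1) * 2 ^+ w) * q ^+ w.
    by rewrite {2}rq exprMn; ring.
  apply: ler_wpM2r; first exact: exprn_ge0.
  by apply: ler_pM => //; rewrite ?ler0n.
have -> : r * r ^+ w = r ^+ w + (r - 1) * r ^+ w by ring.
by apply: lerD => //; rewrite exprS.
Qed.

Lemma fix_bound (R : realFieldType) (n : nat) (pi : 'S_n) (r : R) : 2 <= r ->
  (forall l, (1 <= l)%N -> (ncycles pi l)%:R <= (r / 2) ^+ l) ->
  forall w, (0 < w)%N -> (#|[set y | (pi ^+ w)%g y == y]|)%:R <= r ^+ w.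
Proof.
move=> r2 hc w w0.
apply: le_trans (geo_bound r2 w).
apply: le_trans (_ : (\sum_(l < w.+1) l * ncycles pi l)%N%:R <= _).
  by rewrite ler_nat fix_count.
rewrite natr_sum; apply: ler_sum => l _; rewrite natrM.
case: (posnP l) => [->|lp]; first by rewrite !mul0r.
apply: ler_wpM2l; rewrite ?ler0n //; exact: hc.
Qed.

End CycR.

Unset Implicit Arguments.
Local Open Scope ring_scope.


Lemma exp_bound (R : realType) (n d : nat) (r : R) : 25 <= r -> (2 * n <= 5 * d)%N ->
  expR (n%:R) <= r ^+ d.
Proof.
move=> r25 hnd.
have e14 : expR (1/4 : R) <= 4/3.
  have h1 := expR_ge1Dx (- (1/4) : R); have h2 := expRxMexpNx_1 (1/4 : R).
  have h3 := expR_gt0 (1/4 : R); nra.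
have h : ((2 * n)%:R <= (5 * d)%:R :> R) by rewrite ler_nat.
rewrite !natrM in h.
apply: (@le_trans _ _ (expR ((10 * d)%N%:R * (1/4)))).
  by rewrite ler_expR natrM; lra.
rewrite expRM_natl exprM.
have e0 : 0 <= expR (1/4 : R) by apply: expR_ge0.
have f0 : (0 : R) <= 4/3 by lra.
apply: (@le_trans _ _ (((4/3 : R) ^+ 10) ^+ d)).
  apply: (@lerXn2r _ _ _ _); rewrite ?nnegrE ?exprn_ge0 //.
  by apply: (@lerXn2r _ _ _ _); rewrite ?nnegrE.
apply: (@le_trans _ _ (25 ^+ d)).
  apply: (@lerXn2r _ _ _ _); rewrite ?nnegrE ?exprn_ge0 //.
  by rewrite !exprS expr0; lra.
by apply: (@lerXn2r _ _ _ _); rewrite ?nnegrE //; lra.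
Qed.

Theorem lemma5p1 (R : realType) :
  exists n0 : nat, forall n : nat, (n0 < n)%N ->
  forall (r : R) (A : {set 'S_n}),
    25 <= r ->
    A \in classes [set: 'S_n] ->
    expR (- (n%:R)) <= mu R A ->
    (forall s : 'S_n, s \in A -> forall l : nat, (1 <= l)%N ->
        (ncycles s l)%:R <= (r / 2) ^+ l) ->
    r_global r A.
Proof.
exists 0%N => n _ r A r25 Acl hmu hcyc d I J d1 iI iJ.
case/imsetP: Acl => pi _ Adef.
have piA : pi \in A by rewrite Adef class_refl.
have r2 : 2 <= r by apply: le_trans r25; lra.
have r5 : 5 <= r by apply: le_trans r25; lra.
have hF := fix_bound r2 (hcyc pi piA).
have cU := card_umv iI iJ.
set C := #|[set c : 'S_n | (pi ^ c)%g == pi]|.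
have cA : n`! = (#|A| * C)%N.
  have := conj_count pi [set: 'S_n]; rewrite setIT -Adef => <-.
  rewrite -card_Sn; apply: eq_card => t; by rewrite !inE.
have cAU : #|[set t : 'S_n | (pi ^ t)%g \in umvirate I J]| = (#|A :&: umvirate I J| * C)%N.
  by rewrite (conj_count pi) -Adef.
have Apos : (0 < #|A|)%N by apply/card_gt0P; exists pi.
have Cpos : (0 < C)%N by apply/card_gt0P; exists 1%g; rewrite inE conjg1.
have fpos : forall k, (0 : R) < (k`!)%:R by move=> k; rewrite ltr0n fact_gt0.
rewrite /mu_cond /mu cU.
case: (ltnP (5 * d) (2 * n)) => h5.
  have hm := main_count r5 hF (m := n) (D := setT) (out := out0 I J).
  rewrite cardsT card_ord Wt0 // tails0 // card_imset // card_ord subnn fact0 muln1 in hm.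
  have {}hm := hm erefl (wf0 I iJ) h5.
  have hT := TU_le pi I J.
  rewrite cAU in hT.
  have hx : ((#|A :&: umvirate I J| * C)%N%:R : R) <= r ^+ d * ((n - d)`!)%:R.
    by apply: le_trans hm; rewrite ler_nat.
  rewrite ler_pdivrMr // cA natrM.
  have -> : r ^+ d * (#|A|%:R / (#|A|%:R * C%:R)) * (n - d)`!%:R
            = (r ^+ d * (n - d)`!%:R) / C%:R.
    field; apply/andP; split; rewrite pnatr_eq0 -lt0n //.
  rewrite ler_pdivlMr ?ltr0n //; by rewrite -natrM.
apply: (@le_trans _ _ 1).
  rewrite ler_pdivrMr // mul1r ler_nat -cU; apply: subset_leq_card; exact: subsetIr.
apply: (@le_trans _ _ (r ^+ d * expR (- n%:R))); last first.
  apply: ler_wpM2l => //; apply: exprn_ge0; apply: le_trans r25; lra.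
rewrite expRN -[X in _ <= X]/(r ^+ d / expR n%:R) ler_pdivlMr ?expR_gt0 // mul1r.
exact: exp_bound.
Qed.
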